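(* Let $q\ge5$ be a prime power with $q\equiv\xi\pmod 3$, $\xi\in\{-1,0,1\}$, and let $\mathcal{C}_\mathscr{C}$ be the $[q+1,q-3,5]_q$ code with parity check matrix whose columns are the vectors $(1,t,t^2,t^3)$, $t\in\mathbb{F}_q$, and $(0,0,0,1)$. Let $w\in\{3,\ldots,\lfloor (q+3)/2\rfloor\}$. (i) If $(W,\xi)\in\{(2,1),(3,1),(3,0)\}$ and $\mathcal{V}^{(W)}_a,\mathcal{V}^{(W)}_b$ are weight-$W$ cosets of $\mathcal{C}_\mathscr{C}$ representing the two distinct weight distributions of weight-$W$ cosets, then $$B_{q+4-w}(\mathcal{V}^{(W)}_a)-(-1)^qB_w(\mathcal{V}^{(W)}_a)=B_{q+4-w}(\mathcal{V}^{(W)}_b)-(-1)^qB_w(\mathcal{V}^{(W)}_b).$$ (ii) If $\xi=-1$ and $\mathcal{V}^{(3)}_a,\mathcal{V}^{(3)}_b,\mathcal{V}^{(3)}_c$ are weight-$3$ cosets of $\mathcal{C}_\mathscr{C}$ representing the three distinct weight distributions of weight-$3$ cosets, then $$B_{q+4-w}(\mathcal{V}^{(3)}_a)-(-1)^qB_w(\mathcal{V}^{(3)}_a)=B_{q+4-w}(\mathcal{V}^{(3)}_b)-(-1)^qB_w(\mathcal{V}^{(3)}_b)=B_{q+4-w}(\mathcal{V}^{(3)}_c)-(-1)^qB_w(\mathcal{V}^{(3)}_c).$$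
   Context: A coset of a linear code $\mathcal{C}\subseteq\mathbb{F}_q^n$ is a set $\mathbf{v}+\mathcal{C}$; its weight is the minimum Hamming weight of its vectors. $B_w(\mathcal{V})$ is the number of vectors of Hamming weight $w$ in the coset $\mathcal{V}$. For $(W,\xi)\in\{(2,1),(3,1),(3,0)\}$ the weight-$W$ cosets of $\mathcal{C}_\mathscr{C}$ have exactly two distinct weight distributions, and for $\xi=-1$ the weight-$3$ cosets have exactly three distinct weight distributions. *)

(* Defs.v *)
From HB Require Import structures.
From mathcomp Require Import all_boot all_order all_algebra all_field.
Set Implicit Arguments. Unset Strict Implicit. Unset Printing Implicit Defensive.
Import Order.TTheory GRing.Theory Num.Theory.
Local Open Scope ring_scope.

(* Coordinates of the length-(q+1) code are indexed by [option F]: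
   [Some t] is the column (1,t,t^2,t^3), [None] is the column (0,0,0,1). *)
Definition vec (F : finFieldType) := {ffun option F -> F}.

Definition pc_row (F : finFieldType) (j : nat) (v : vec F) : F :=
  \sum_(t : F) v (Some t) * t ^+ j + (j == 3%N)%:R * v None.

Definition code (F : finFieldType) : {set vec F} :=
  [set v : vec F | [forall j : 'I_4, pc_row j v == 0]].

Definition coset (F : finFieldType) (v : vec F) : {set vec F} :=
  [set u : vec F | u - v \in code F].

Definition wt (F : finFieldType) (u : vec F) : nat := #|[set i | u i != 0]|.

Definition coset_has_weight (F : finFieldType) (V : {set vec F}) (W : nat) : Prop :=
  (exists2 u, u \in V & wt u = W) /\ (forall u, u \in V -> (W <= wt u)%N).

Definition B (F : finFieldType) (w : nat) (V : {set vec F}) : nat :=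
  #|[set u in V | wt u == w]|.

Definition Dq (F : finFieldType) (w : nat) (V : {set vec F}) : int :=
  (B (#|F| + 4 - w) V)%:Z - (-1) ^+ #|F| * (B w V)%:Z.

(* Main.v *)
Require Import Defs.
From HB Require Import structures.
From mathcomp Require Import all_boot all_order all_algebra all_field.
From mathcomp Require Import zify ring lra.
Import Order.TTheory GRing.Theory Num.Theory.
Set Implicit Arguments. Unset Strict Implicit. Unset Printing Implicit Defensive.
Local Open Scope ring_scope.

Definition supp (F : finFieldType) (u : vec F) : {set option F} := [set i | u i != 0].

Lemma pc_rowB (F : finFieldType) (j : nat) (u v : vec F) :
  pc_row j (u - v) = pc_row j u - pc_row j v.
Proof.
have e : forall i, (u - v) i = u i - v i by move=> i; rewrite !ffunE.
rewrite /pc_row; under eq_bigr do rewrite e mulrBl.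
rewrite sumrB e; ring.
Qed.

Lemma in_coset (F : finFieldType) (u v : vec F) :
  (u \in coset v) = [forall j : 'I_4, pc_row j u == pc_row j v].
Proof.
rewrite !inE; apply: eq_forallb => j; by rewrite pc_rowB subr_eq0.
Qed.

Lemma wt_split (F : finFieldType) (u : vec F) :
  wt u = (#|[set t | u (Some t) != 0%R]| + (u None != 0%R))%N.
Proof.
rewrite /wt (cardsD1 None) inE addnC; congr (_ + _)%N.
rewrite -[RHS](card_imset _ Some_inj); apply: eq_card => i.
case: i => [t|]; rewrite !inE /=.
  by rewrite (mem_imset _ _ Some_inj) inE.
by apply/esym/imsetP => [[x _]].
Qed.

Lemma code_wt (F : finFieldType) (u : vec F) :
  u \in code F -> (wt u <= 4)%N -> u = 0.
Proof.
move=> uc wt4.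
have H0 : forall j : 'I_4, pc_row j u = 0.
  by move: uc; rewrite inE => /forallP H j; apply/eqP; exact: H.
have claim : forall t0, u (Some t0) = 0.
  move=> t0; apply/eqP; apply/negPn/negP => nz.
  pose Sf := [set t | u (Some t) != 0].
  pose S := Sf :\ t0.
  pose p := \prod_(t in S) ('X - t%:P).
  have sp : size p = (#|S|).+1.
    by rewrite /p -big_enum /= size_prod_XsubC cardE.
  have ws := wt_split u.
  have cS : #|Sf| = (#|S|).+1.
    by rewrite (cardsD1 t0 Sf) inE nz.
  have sp4 : (size p <= 4)%N by rewrite sp; move: wt4; rewrite ws cS; lia.
  have E : \sum_(j < 4) p`_j * pc_row j u = 0.
    by rewrite big1 // => j _; rewrite H0 mulr0.
  have E2 : \sum_(j < 4) p`_j * pc_row j u =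
     \sum_(t : F) u (Some t) * p.[t] + p`_3 * u None.
    rewrite /pc_row.
    under eq_bigr do rewrite mulrDr.
    rewrite big_split /=; congr (_ + _).
      under eq_bigr do rewrite big_distrr /=.
      rewrite exchange_big /=; apply: eq_bigr => t _.
      rewrite (horner_coef_wide t sp4) big_distrr /=.
      by apply: eq_bigr => j _; ring.
    by rewrite !big_ord_recr big_ord0 /=; ring.
  have E3 : \sum_(t : F) u (Some t) * p.[t] = u (Some t0) * p.[t0].
    rewrite (bigD1 t0) //= big1 ?addr0 // => t tt0.
    case: (eqVneq (u (Some t)) 0) => [->|ut]; first by rewrite mul0r.
    have tS : t \in S by rewrite !inE tt0 ut.
    have : root p t by rewrite /p -big_enum /= root_prod_XsubC mem_enum.
    by move/rootP => ->; rewrite mulr0.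
  have E4 : p`_3 * u None = 0.
    case: (eqVneq (u None) 0) => [->|un]; first by rewrite mulr0.
    rewrite nth_default ?mul0r //.
    rewrite sp; move: ws; rewrite un cS /=; lia.
  have pt0 : p.[t0] != 0.
    rewrite /p horner_prod; apply/prodf_neq0 => t tS.
    rewrite !hornerE subr_eq0; apply/eqP => et; move: tS; rewrite -et !inE eqxx.
    by [].
  move: E; rewrite E2 E3 E4 addr0 => /eqP; rewrite mulf_eq0 (negbTE nz) (negbTE pt0).
  by [].
have uN : u None = 0.
  have := H0 (inord 3); rewrite /pc_row inordK // big1 ?add0r ?mul1r //.
  by move=> t _; rewrite claim mul0r.
by apply/ffunP => [[t|]]; rewrite ffunE ?claim ?uN.
Qed.

Lemma wt_sub (F : finFieldType) (u v : vec F) : (wt (u - v)%R <= wt u + wt v)%N.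
Proof.
rewrite /wt; apply: (leq_trans (n := #|[set i | u i != 0] :|: [set i | v i != 0]|)).
  apply: subset_leq_card; apply/subsetP => i; rewrite !inE !ffunE => h.
  apply/orP; case: (eqVneq (u i) 0) => ui; last by left.
  by right; move: h; rewrite ui sub0r oppr_eq0.
by rewrite cardsU; lia.
Qed.

Lemma supp_subB (F : finFieldType) (u v : vec F) (T : {set option F}) :
  supp u \subset T -> supp v \subset T -> supp (u - v) \subset T.
Proof.
move=> /subsetP hu /subsetP hv; apply/subsetP => i; rewrite !inE !ffunE => h.
case: (eqVneq (u i) 0) => ui.
  by apply: hv; rewrite inE; move: h; rewrite ui sub0r oppr_eq0.
by apply: hu; rewrite inE.
Qed.

Definition syn (F : finFieldType) (x : vec F) : {ffun 'I_4 -> F} := [ffun j : 'I_4 => pc_row j x].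

Lemma exists_sol (F : finFieldType) (v : vec F) (T : {set option F}) :
  (4 <= #|T|)%N -> exists2 x, x \in coset v & supp x \subset T.
Proof.
move=> T4.
have : exists2 T' : {set option F}, T' \subset T & #|T'| = 4%N.
  have : (0 < #|[set A : {set option F} | A \subset T & #|A| == 4%N]|)%N by rewrite cards_draws bin_gt0.
  by case/card_gt0P => A; rewrite inE => /andP [AT /eqP A4]; exists A.
case=> T' T'T T'4.
pose P := [set x : vec F | supp x \subset T'].
have inj : {in P &, injective (@syn F)}.
  move=> x y; rewrite !inE => hx hy exy.
  have c : x - y \in code F.
    rewrite inE; apply/forallP => j; rewrite pc_rowB.
    have := congr1 (fun f : {ffun 'I_4 -> F} => f j) exy; rewrite !ffunE => ->.
    by rewrite subrr.
  have w4 : (wt (x - y)%R <= 4)%N.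
    by rewrite -T'4; apply: subset_leq_card; apply: supp_subB.
  by apply/eqP; rewrite -subr_eq0; apply/eqP; apply: code_wt.
have cP : #|P| = (#|F| ^ 4)%N.
  transitivity #|pffun_on (0 : F) T' predT|; last by rewrite card_pffun_on T'4.
  apply: eq_card => x; rewrite inE.
  apply/idP/pffun_onP => [h|[h _]].
    split=> //; apply/subsetP => i; rewrite supportE => hi.
    by move/subsetP: h; apply; rewrite inE.
  apply/subsetP => i; rewrite inE => hi.
  by move/subsetP: h; apply; rewrite supportE.
have full : (@syn F) @: P = setT.
  apply/eqP; rewrite eqEcard subsetT /= cardsT card_ffun card_ord.
  by rewrite (card_in_imset inj) cP.
have : syn v \in (@syn F) @: P by rewrite full inE.
case/imsetP => x xP ex; exists x.
  rewrite in_coset; apply/forallP => j.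
  by have := congr1 (fun f : {ffun 'I_4 -> F} => f j) ex; rewrite !ffunE => ->.
by apply: subset_trans T'T; move: xP; rewrite inE.
Qed.

Lemma NT_eq (F : finFieldType) (v : vec F) (T : {set option F}) :
  (4 <= #|T|)%N ->
  #|[set u in coset v | supp u \subset T]| = #|[set u in code F | supp u \subset T]|.
Proof.
move=> T4; have [x xv xT] := exists_sol v T4.
rewrite -[RHS](card_preimset _ (addIr (- x))).
apply: eq_card => u; rewrite !inE.
have -> : [forall j : 'I_4, pc_row j (u - v) == 0] = [forall j : 'I_4, pc_row j (u - x) == 0].
  move: xv; rewrite !inE => /forallP hx.
  apply: eq_forallb => j; rewrite !pc_rowB.
  by have := hx j; rewrite pc_rowB subr_eq0 => /eqP ->.
congr (_ && _); apply/idP/idP => h.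
  exact: supp_subB.
have nx : supp (- x) \subset T.
  by apply/subsetP => i; rewrite !inE ffunE oppr_eq0 => hi; move/subsetP: xT; apply; rewrite inE.
have := supp_subB h nx; by rewrite opprK subrK.
Qed.

Lemma count_sup (I : finType) (S : {set I}) (t : nat) : (t <= #|I|)%N ->
  #|[set T : {set I} | (S \subset T) && (#|T| == t)]| = 'C(#|I| - #|S|, #|I| - t).
Proof.
move=> tI.
have -> : (#|I| - #|S| = #|~: S|)%N by have := cardsC S; lia.
rewrite -cards_draws -(card_preimset _ (@setC_inj I)).
apply: eq_card => T; rewrite !inE subsetC; congr (_ && _).
have := cardsC T; have := max_card (mem T).
by move=> h1 h2; apply/eqP/eqP; lia.
Qed.

Lemma wt_le (F : finFieldType) (u : vec F) : (wt u <= #|F|.+1)%N.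
Proof. by rewrite /wt -card_option max_card. Qed.

Lemma card_sep (T : finType) (A : {set T}) (P : pred T) :
  #|[set u in A | P u]| = (\sum_(u | (u \in A) && P u) 1)%N.
Proof. by rewrite sum1dep_card. Qed.

Lemma dcount (F : finFieldType) (V : {set vec F}) (t : nat) : (t <= #|F|.+1)%N ->
  (\sum_(T : {set option F} | #|T| == t) #|[set u in V | supp u \subset T]| =
  \sum_(k < #|F|.+2) B k V * 'C(#|F|.+1 - k, #|F|.+1 - t))%N.
Proof.
move=> ht.
transitivity (\sum_(u in V) 'C(#|F|.+1 - wt u, #|F|.+1 - t))%N.
  rewrite [LHS](eq_bigr (fun T : {set option F} => \sum_(u | (u \in V) && (supp u \subset T)) 1)%N); last by move=> T _; rewrite card_sep.
  rewrite (exchange_big_dep (fun u => u \in V)) /=; last by move=> T u _ /andP [].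
  apply: eq_bigr => u uV.
  rewrite sum1dep_card -card_option -(count_sup (supp u)); last by rewrite card_option.
  by apply: eq_card => T; rewrite !inE uV andbC.
rewrite (partition_big (fun u => inord (wt u) : 'I_(#|F|.+2)) xpredT) //=.
apply: eq_bigr => k _.
rewrite -sum_nat_const.
apply: eq_big => u.
  rewrite !inE; case: (u \in V) => //=.
  by rewrite -val_eqE /= inordK // ltnS wt_le.
rewrite -val_eqE /= inordK ?ltnS ?wt_le //.
by move=> /andP [_ /eqP ->].
Qed.

Lemma coset_diff (F : finFieldType) (v u u0 : vec F) :
  u \in coset v -> u0 \in coset v -> u - u0 \in code F.
Proof.
rewrite !in_coset => /forallP h1 /forallP h2; rewrite inE; apply/forallP => j.
by rewrite pc_rowB (eqP (h1 j)) (eqP (h2 j)) subrr.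
Qed.

Lemma B_low (F : finFieldType) (v : vec F) (W k : nat) :
  (W == 2%N) || (W == 3%N) -> coset_has_weight (coset v) W -> (k < 3)%N ->
  B k (coset v) = ((W == 2%N) && (k == 2%N) : nat).
Proof.
move=> hW [[u0 u0v wu0] hmin] k3.
case: (ltnP k W) => kW.
  have -> : (W == 2%N) && (k == 2%N) = false.
    by case/orP: hW => /eqP Wv; subst W; apply/negbTE; lia.
  rewrite /B; apply/eqP; rewrite cards_eq0; apply/eqP/setP => u; rewrite !inE.
  apply/negbTE/andP => [[uv /eqP wk]]; have := hmin u (ltac:(by rewrite !inE)); lia.
have W2 : W = 2%N by case/orP: hW => /eqP; lia.
have k2 : k = 2%N by lia.
rewrite W2 k2 /=.
rewrite /B (_ : [set u in coset v | wt u == 2%N] = [set u0]) ?cards1 //.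
apply/setP => u; rewrite !inE; apply/andP/eqP => [[uv /eqP wk]|->]; last first.
  by rewrite wu0 W2 eqxx; split=> //; move: u0v; rewrite !inE.
have c := coset_diff (v := v) (u := u) (ltac:(by rewrite !inE)) u0v.
have w4 : (wt (u - u0)%R <= 4)%N by have := wt_sub u u0; rewrite wk wu0 W2; exact.
by apply/eqP; rewrite -subr_eq0; apply/eqP; apply: code_wt.
Qed.
Lemma bin_swap (M m a : nat) : (m <= M)%N ->
  ('C(M, a) * 'C(M - a, M - m) = 'C(M, m) * 'C(m, a))%N.
Proof.
move=> mM; case: (leqP a m) => am; last first.
  rewrite (bin_small am) muln0.
  case: (leqP a M) => aM; last by rewrite (bin_small aM).
  have h : (M - a < M - m)%N by lia.
  by rewrite (bin_small h) muln0.
rewrite (_ : (M - m = (M - a) - (m - a))%N); last lia.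
rewrite bin_sub; last lia.
have H1 := bin_fact (leq_trans am mM).
have H2 : (m - a <= M - a)%N by lia.
have H2' := bin_fact H2.
have H3 := bin_fact mM.
have H4 := bin_fact am.
have E : (M - a - (m - a) = M - m)%N by lia.
rewrite E in H2'.
apply/eqP; rewrite -(eqn_pmul2r (m := (a`! * (m - a)`! * (M - m)`!)%N)); last first.
  by rewrite !muln_gt0 !fact_gt0.
apply/eqP.
transitivity M`!; last first.
  by rewrite -H3 -H4; ring.
by rewrite -H1 -H2'; ring.
Qed.

Lemma alt_bin (m : nat) : (0 < m)%N -> \sum_(a < m.+1) (-1) ^+ a * ('C(m, a))%:R = 0 :> int.
Proof.
move=> m0.
have := exprBn (1 : int) 1 m.
rewrite subrr expr0n eqn0Ngt m0 /= => E.
rewrite [RHS]E; apply: eq_bigr => i _; by rewrite !expr1n !mulr1 mulr_natr.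
Qed.

Lemma alg (N : nat) (e : nat -> int) :
  (forall k, (k < 3)%N -> e k = 0) ->
  (forall t, (4 <= t <= N)%N -> \sum_(k < N.+1) e k * ('C(N - k, N - t))%:R = 0) ->
  forall k, (3 <= k <= N)%N -> e k = (-1) ^+ (k - 3) * ('C(N - 3, k - 3))%:R * e 3%N.
Proof.
move=> e0 He.
pose f k : int := if (k < 3)%N then 0 else (-1) ^+ (k - 3) * ('C(N - 3, k - 3))%:R * e 3%N.
have Hf : forall t, (4 <= t <= N)%N -> \sum_(k < N.+1) f k * ('C(N - k, N - t))%:R = 0.
  move=> t /andP [t4 tN].
  rewrite -(big_mkord xpredT (fun k => f k * ('C(N - k, N - t))%:R)) (big_cat_nat (n := 3)) //=; last lia.
  rewrite big_nat big1 ?add0r; last by move=> k /andP [_ k3]; rewrite /f k3 mul0r.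
  rewrite (big_addn 0 _ 3) /=.
  rewrite (eq_bigr (fun a => e 3%N * ('C(N - 3, t - 3))%:R * ((-1) ^+ a * ('C(t - 3, a))%:R))); last first.
    move=> a _; rewrite /f ltnNge leq_addl /= addnK.
    have -> : (N - (a + 3) = (N - 3) - a)%N by lia.
    have -> : (N - t = (N - 3) - (t - 3))%N by lia.
    have HB := @bin_swap (N - 3)%N (t - 3)%N a.
    rewrite (_ : (t - 3 <= N - 3)%N) in HB; last lia.
    apply: (@eq_trans _ _ ((-1) ^+ a * e 3%N * ('C(N - 3, a) * 'C(N - 3 - a, N - 3 - (t - 3)))%:R)).
      by rewrite natrM; ring.
    by rewrite HB // natrM; ring.
  rewrite -big_distrr /=; apply/eqP; rewrite mulf_eq0; apply/orP; right; apply/eqP.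
  rewrite (big_cat_nat (n := (t - 3).+1)) //=; last lia.
  rewrite addrC big_nat big1 ?add0r; last first.
    by move=> a /andP [ha _]; rewrite bin_small ?mulr0.
  by rewrite big_mkord alt_bin //; lia.
pose d k := e k - f k.
have Hd : forall t, (4 <= t <= N)%N -> \sum_(k < N.+1) d k * ('C(N - k, N - t))%:R = 0.
  move=> t ht; rewrite /d.
  under eq_bigr do rewrite mulrBl.
  by rewrite sumrB He // Hf // subr0.
have D : forall t, (t <= N)%N -> d t = 0.
  elim/ltn_ind => t IH tN.
  case: (leqP t 3) => t3.
    rewrite /d /f; case: ltnP => t3'.
      by rewrite e0 // subr0.
    have -> : t = 3%N by lia.
    by rewrite subnn expr0 bin0 mul1r; ring.
  have := Hd t; rewrite t3 tN => /(_ isT).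
  rewrite (bigD1 (Ordinal (n := N.+1) (m := t) (tN : (t < N.+1)%N))) //= binn mulr1.
  rewrite big1 ?addr0 //.
  move=> [k hk] /= hkt.
  have hkt' : k != t by apply: contra hkt => /eqP hh; apply/eqP; apply: val_inj.
  case: (ltngtP k t) hkt' => // kt _.
    by rewrite IH ?mul0r //; lia.
  by rewrite bin_small ?mulr0 //; lia.
move=> k hk.
have := D k; rewrite (_ : (k <= N)%N); last by lia.
move=> /(_ isT) /eqP; rewrite /d subr_eq0 => /eqP ->.
by rewrite /f ltnNge; case/andP: hk => -> _.
Qed.


Lemma fin_arith (q w : nat) (e : nat -> int) : (3 <= w <= q.+1)%N ->
  (forall k, (3 <= k <= q.+1)%N -> e k = (-1) ^+ (k - 3) * ('C(q.+1 - 3, k - 3))%:R * e 3%N) ->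
  e (q + 4 - w)%N - (-1) ^+ q * e w = 0.
Proof.
move=> hw Hal.
rewrite (Hal (q + 4 - w)%N); last lia.
rewrite (Hal w); last lia.
have -> : (q + 4 - w - 3 = (q.+1 - 3) - (w - 3))%N by lia.
rewrite (@bin_sub (q.+1 - 3)%N (w - 3)%N); last by lia.
have -> : (-1) ^+ (q.+1 - 3 - (w - 3)) = (-1) ^+ q * (-1) ^+ (w - 3) :> int.
  rewrite -exprD.
  have -> : (q + (w - 3) = (q.+1 - 3 - (w - 3)) + (w - 2) * 2)%N by lia.
  by rewrite exprD mulnC exprM sqrrN !expr1n mulr1.
ring.
Qed.

Lemma main_eq (F : finFieldType) (W w : nat) (va vb : vec F) :
  (W == 2%N) || (W == 3%N) ->
  coset_has_weight (coset va) W -> coset_has_weight (coset vb) W ->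
  (3 <= w <= #|F|.+1)%N ->
  Dq w (coset va) = Dq w (coset vb).
Proof.
move=> hW ha hb hw.
pose N := #|F|.+1.
pose e k : int := (B k (coset va))%:R - (B k (coset vb))%:R.
have e0 : forall k, (k < 3)%N -> e k = 0.
  by move=> k k3; rewrite /e (B_low hW ha k3) (B_low hW hb k3) subrr.
have He : forall t, (4 <= t <= N)%N -> \sum_(k < N.+1) e k * ('C(N - k, N - t))%:R = 0.
  move=> t /andP [t4 tN].
  have Hn : (\sum_(k < #|F|.+2) B k (coset va) * 'C(#|F|.+1 - k, #|F|.+1 - t))%N =
            (\sum_(k < #|F|.+2) B k (coset vb) * 'C(#|F|.+1 - k, #|F|.+1 - t))%N.
    rewrite -!dcount //; apply: eq_bigr => T /eqP hT.
    by rewrite !NT_eq // hT.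
  rewrite /e; under eq_bigr do rewrite mulrBl -!natrM.
  by rewrite sumrB -!natr_sum Hn subrr.
have Hal := alg e0 He.
rewrite /Dq.
apply/eqP; rewrite -subr_eq0; apply/eqP.
have -> : (B (#|F| + 4 - w) (coset va))%:Z - (-1) ^+ #|F| * (B w (coset va))%:Z -
  ((B (#|F| + 4 - w) (coset vb))%:Z - (-1) ^+ #|F| * (B w (coset vb))%:Z) =
  e (#|F| + 4 - w)%N - (-1) ^+ #|F| * e w.
  by rewrite /e -!natz; ring.
exact: fin_arith hw Hal.
Qed.

Unset Implicit Arguments.

Theorem theorem5p2 (F : finFieldType) (xi : int) (w : nat) :
  (5 <= #|F|)%N ->
  xi \in [:: -1; 0; 1] ->
  (#|F|%:Z = xi %[mod 3])%Z ->
  (3 <= w <= (#|F| + 3)./2)%N ->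
  (forall W : nat, (W, xi) \in [:: (2%N, 1); (3%N, 1); (3%N, 0)] ->
     forall va vb : vec F,
       coset_has_weight (coset va) W -> coset_has_weight (coset vb) W ->
       Dq w (coset va) = Dq w (coset vb))
  /\
  (xi = -1 ->
     forall va vb vc : vec F,
       coset_has_weight (coset va) 3 -> coset_has_weight (coset vb) 3 ->
       coset_has_weight (coset vc) 3 ->
       Dq w (coset va) = Dq w (coset vb) /\ Dq w (coset vb) = Dq w (coset vc)).
Proof.
move=> q5 _ _ /andP [w3 wle].
have hw : (3 <= w <= #|F|.+1)%N.
  rewrite w3 /=; apply: leq_trans wle _.
  have h := odd_double_half (#|F| + 3); rewrite -addnn in h; move: h; set H := (_ ./2); case: (odd _) => /= h; lia.
split.
  move=> W hWin va vb ha hb; apply: (main_eq _ ha hb hw).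
  by move: hWin; rewrite !inE => /or3P [] /eqP [-> _].
move=> _ va vb vc ha hb hc.
split; [exact: (@main_eq F 3%N w va vb isT ha hb hw) | exact: (@main_eq F 3%N w vb vc isT hb hc hw)].
Qed.
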